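(* Let $n\geqslant 2$ and $\alpha\in\mathbf{I}\mathbb{N}_{\infty}^n$. Then there exist unique elements $\sigma_l,\sigma_r$ of the group of units $H(\mathbb{I})$ of $\mathbf{I}\mathbb{N}_{\infty}^n$ such that $\sigma_l\alpha$ and $\alpha\sigma_r$ are idempotents of $\mathbf{I}\mathbb{N}_{\infty}^n$.
   Context: $\mathbb{N}=\{1,2,3,\ldots\}$, $n\geqslant 2$, and $\mathbb{N}^n$ carries the Euclidean metric $d$. A partial isometry of $\mathbb{N}^n$ is an injective partial map $\alpha\colon\mathbb{N}^n\rightharpoonup\mathbb{N}^n$ with $d((\mathbf{x})\alpha,(\mathbf{y})\alpha)=d(\mathbf{x},\mathbf{y})$ for all $\mathbf{x},\mathbf{y}\in\operatorname{dom}\alpha$; it is cofinite if $\mathbb{N}^n\setminus\operatorname{dom}\alpha$ and $\mathbb{N}^n\setminus\operatorname{ran}\alpha$ are finite. $\mathbf{I}\mathbb{N}_{\infty}^n$ is the monoid of all partial cofinite isometries of $\mathbb{N}^n$ under composition of partial maps written on the right: $\mathbf{x}(\alpha\beta)=(\mathbf{x}\alpha)\beta$ with $\operatorname{dom}(\alpha\beta)=\{\mathbf{x}\in\operatorname{dom}\alpha\colon \mathbf{x}\alpha\in\operatorname{dom}\beta\}$. Its identity is the identity map $\mathbb{I}$ of $\mathbb{N}^n$ and $H(\mathbb{I})$ is its group of units. *)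

(* Defs.v *)
From mathcomp Require Import all_boot.
Set Implicit Arguments. Unset Strict Implicit. Unset Printing Implicit Defensive.

(* Points of Z^n represented by {ffun 'I_n -> nat}; the points of N^n
   (N = {1,2,...}) are those with all coordinates positive. *)
Definition pt (n : nat) := {ffun 'I_n -> nat}.
Definition inN n (x : pt n) : bool := [forall i, 0 < x i].

Definition absdiff (a b : nat) : nat := (a - b) + (b - a).
Definition d2 n (x y : pt n) : nat := \sum_(i < n) (absdiff (x i) (y i)) ^ 2.

Definition pmapN n := pt n -> option (pt n).

Definition in_dom n (a : pmapN n) (x : pt n) : Prop := exists y, a x = Some y.
Definition in_ran n (a : pmapN n) (y : pt n) : Prop := exists x, a x = Some y.

Definition partial_map_of_Nn n (a : pmapN n) : Prop :=
  (forall x y, a x = Some y -> inN x /\ inN y).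
Definition pinjective n (a : pmapN n) : Prop :=
  forall x y z, a x = Some z -> a y = Some z -> x = y.
Definition pisometry n (a : pmapN n) : Prop :=
  forall x y x' y', a x = Some x' -> a y = Some y' -> d2 x' y' = d2 x y.
Definition cofinite n (a : pmapN n) : Prop :=
  (exists s : seq (pt n), forall x, inN x -> ~ in_dom a x -> x \in s) /\
  (exists s : seq (pt n), forall y, inN y -> ~ in_ran a y -> y \in s).

Definition INinf n (a : pmapN n) : Prop :=
  [/\ partial_map_of_Nn a, pinjective a, pisometry a & cofinite a].

(* composition written on the right: x (a b) = (x a) b *)
Definition pcompN n (a b : pmapN n) : pmapN n :=
  fun x => match a x with Some y => b y | None => None end.

Definition pidN n : pmapN n := fun x => if inN x then Some x else None.

Definition peq n (a b : pmapN n) : Prop := forall x, a x = b x.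

Definition unitH n (s : pmapN n) : Prop :=
  INinf s /\ exists t, INinf t /\ peq (pcompN s t) (@pidN n) /\ peq (pcompN t s) (@pidN n).

Definition idempotentI n (e : pmapN n) : Prop := INinf e /\ peq (pcompN e e) e.

(* Main.v *)
Require Import Defs.
From mathcomp Require Import all_boot all_order all_algebra all_fingroup.
From mathcomp Require Import zify ring lra.
From Stdlib Require Import Classical.
Import Order.TTheory GRing.Theory Num.Theory.
Set Implicit Arguments. Unset Strict Implicit. Unset Printing Implicit Defensive.


Local Open Scope ring_scope.

Lemma absdiff_sq a b : (((absdiff a b) ^ 2)%N)%:Z = (a%:Z - b%:Z) ^+ 2.
Proof. rewrite /absdiff. case: (leqP a b) => h; rewrite expr2 ; nia. Qed.

Definition zc n (x : pt n) (j : 'I_n) : int := (x j)%:Z.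
Definition d2z n (x y : pt n) : int := \sum_(j < n) (zc x j - zc y j) ^+ 2.

Lemma d2E n (x y : pt n) : (d2 x y)%:Z = d2z x y.
Proof.
rewrite /d2 /d2z; apply: (big_rec2 (fun u v => Posz u = v)) => // j u v _ <-.
by rewrite PoszD absdiff_sq.
Qed.

Lemma d2zC n (x y : pt n) : d2z x y = d2z y x.
Proof. by apply: eq_bigr => j _; rewrite -sqrrN opprB. Qed.

Lemma d2zz n (x : pt n) : d2z x x = 0.
Proof. by rewrite /d2z big1 // => j _; rewrite subrr expr0n. Qed.

Lemma sq_expand n (f g : 'I_n -> int) :
  \sum_j (f j - g j) ^+ 2 = \sum_j f j ^+ 2 - 2 * \sum_j f j * g j + \sum_j g j ^+ 2.
Proof.
rewrite mulr_sumr -sumrB -big_split /=; apply: eq_bigr => j _; ring.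
Qed.

Lemma sum_single n (F g : 'I_n -> int) t :
  (forall j, j != t -> g j = 0) -> \sum_j F j * g j = F t * g t.
Proof.
move=> h; rewrite (bigD1 t) //= big1 ?addr0 // => j /h ->; by rewrite mulr0.
Qed.

Definition shiftp n (w : pt n) (i : 'I_n) : pt n := [ffun j => (w j + (j == i))%N].

Lemma d2z_shift n (x w : pt n) i :
  d2z x (shiftp w i) = d2z x w + 1 + 2 * (zc w i - zc x i).
Proof.
rewrite /d2z.
have -> : \sum_(j < n) (zc x j - zc (shiftp w i) j) ^+ 2 =
          \sum_(j < n) ((zc x j - zc w j) - (j == i)%:R) ^+ 2.
  apply: eq_bigr => j _; rewrite /zc /shiftp ffunE PoszD; congr (_ ^+ 2).
  by case: (j == i); rewrite /=; ring.
rewrite sq_expand (sum_single _ (t:=i)); last by move=> j /negbTE ->.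
have -> : \sum_(j < n) ((j == i)%:R : int) ^+ 2 = 1.
  rewrite (bigD1 i) //= eqxx big1 ?addr0 ?expr1n // => j /negbTE ->.
  by rewrite expr0n.
rewrite eqxx mulr1; ring.
Qed.


Local Close Scope ring_scope.


Local Open Scope ring_scope.

Lemma farpt n (x z : pt n) (K : nat) :
  (forall w : pt n, (forall j, K <= w j)%N -> d2 x w = d2 z w) -> x = z.
Proof.
move=> h; apply/ffunP => j.
pose w0 : pt n := [ffun=> K].
have hw0 : forall j, (K <= w0 j)%N by move=> k; rewrite ffunE.
have hw1 : forall k, (K <= shiftp w0 j k)%N by move=> k; rewrite !ffunE leq_addr.
have e0 := h _ hw0; have e1 := h _ hw1.
move: e0 e1 => /(congr1 Posz) e0 /(congr1 Posz) e1.
rewrite !d2E !d2z_shift in e0 e1.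
have : zc x j = zc z j by lia.
by rewrite /zc => -[].
Qed.

Lemma sq_ge1 (c : int) : c != 0 -> 1 <= c ^+ 2.
Proof.
move/eqP=> hc; rewrite expr2.
have [h1|h1] : (1 <= c) \/ (c <= -1) by lia.
all: nia.
Qed.

Lemma UV n (w : 'I_n -> int) : \sum_j w j ^+ 2 = 1 ->
  exists k, (w k = 1 \/ w k = -1) /\ forall j, j != k -> w j = 0.
Proof.
move=> hs; case: (pickP (fun j => w j != 0)) => [k hk | h0]; last first.
  move: hs; rewrite big1 // => j _; move/negbFE/eqP: (h0 j) => ->.
  by rewrite expr0n.
move: hs; rewrite (bigD1 k) //= => hs.
have hr : 0 <= \sum_(i < n | i != k) w i ^+ 2 by apply: sumr_ge0 => j _; apply: sqr_ge0.
have hk1 : 1 <= w k ^+ 2.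
  exact: sq_ge1.
have hr0 : \sum_(i < n | i != k) w i ^+ 2 = 0.
  set S := \sum_(i < n | i != k) _ in hs hr *. lia.
exists k; split.
  have : w k ^+ 2 == 1 by apply/eqP; move: hs; rewrite hr0 addr0.
  by rewrite sqrf_eq1 => /orP [] /eqP ->; [left|right].
move=> j hj; have := psumr_eq0P (fun i _ => sqr_ge0 (w i)) hr0 hj.
by move/eqP; rewrite sqrf_eq0 => /eqP.
Qed.

Definition maxc n (s : seq (pt n)) : nat := \max_(x <- s) \max_(j < n) x j.

Lemma maxc_ge n (s : seq (pt n)) x j : x \in s -> (x j <= maxc s)%N.
Proof.
move=> hx; apply: (@leq_trans (\max_(j < n) x j)); first exact: leq_bigmax.
rewrite /maxc; exact: (leq_bigmax_seq (F := fun y : pt n => \max_(j < n) y j) x hx isT).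
Qed.

Lemma exists_other n (hn : (2 <= n)%N) (i : 'I_n) : exists j : 'I_n, j != i.
Proof.
case: (eqVneq (nat_of_ord i) 0%N) => h.
  have h1 : (1 < n)%N by [].
  by exists (Ordinal h1); apply/eqP => /(congr1 val) /=; rewrite h.
have h0 : (0 < n)%N by apply: leq_trans hn.
by exists (Ordinal h0); apply/eqP => /(congr1 val) /= h'; move: h; rewrite /= -h'.
Qed.


Local Close Scope ring_scope.



Definition uf n (t : {perm 'I_n}) (y : pt n) : pt n := [ffun i => y (t i)].
Definition um n (t : {perm 'I_n}) : pmapN n :=
  fun y => if inN y then Some (uf t y) else None.

Lemma ufK n (t : {perm 'I_n}) y : uf (t^-1)%g (uf t y) = y.
Proof. by apply/ffunP => i; rewrite !ffunE permKV. Qed.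
Lemma ufKV n (t : {perm 'I_n}) y : uf t (uf (t^-1)%g y) = y.
Proof. by apply/ffunP => i; rewrite !ffunE permK. Qed.

Lemma inN_uf n (t : {perm 'I_n}) y : inN (uf t y) = inN y.
Proof.
rewrite /inN; apply/forallP/forallP => h i.
  by have := h ((t^-1)%g i); rewrite ffunE permKV.
by rewrite ffunE.
Qed.

Lemma d2_uf n (t : {perm 'I_n}) x y : d2 (uf t x) (uf t y) = d2 x y.
Proof.
rewrite /d2 [RHS](reindex_inj (@perm_inj _ t)) /=.
by apply: eq_bigr => i _; rewrite !ffunE.
Qed.

Lemma INinf_um n (t : {perm 'I_n}) : INinf (um t).
Proof.
split.
- by move=> x y; rewrite /um; case: ifP => // h [<-]; rewrite inN_uf h.
- move=> x y z; rewrite /um; case: ifP => // _ [<-]; case: ifP => // _ [].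
  by move/(congr1 (uf (t^-1)%g)); rewrite !ufK.
- move=> x y x' y'; rewrite /um; case: ifP => // _ [<-]; case: ifP => // _ [<-].
  exact: d2_uf.
- split; exists [::] => x hx; [case; exists (uf t x); by rewrite /um hx|].
  case; exists (uf (t^-1)%g x); by rewrite /um inN_uf hx ufKV.
Qed.

Lemma unitH_um n (t : {perm 'I_n}) : unitH (um t).
Proof.
split; first exact: INinf_um.
exists (um (t^-1)%g); split; first exact: INinf_um.
split => x; rewrite /pcompN /um /pidN; case: ifP => // h.
  by rewrite inN_uf h ufK.
by rewrite inN_uf h ufKV.
Qed.

Lemma pid_idem n (e : pmapN n) :
  (forall y z, e y = Some z -> z = y /\ inN y) ->
  (exists s : seq (pt n), forall x, inN x -> ~ in_dom e x -> x \in s) ->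
  idempotentI e.
Proof.
move=> he [s hs]; split; last first.
  move=> x; rewrite /pcompN; case E: (e x) => [y|] //.
  by have [hy _] := he _ _ E; subst y.
split.
- by move=> x y /he [-> h].
- by move=> x y z /he [-> _] /he [-> _].
- by move=> x y x' y' /he [-> _] /he [-> _].
- split; exists s => // x hx hr; apply: hs => // -[y E].
  apply: hr; exists x; have [hy _] := he _ _ E; subst y; exact: E.
Qed.

Lemma idem_pid n (e : pmapN n) : idempotentI e -> forall y z, e y = Some z -> z = y.
Proof.
move=> [[_ hinj _ _] hp] y z E.
have := hp y; rewrite /pcompN E => E2.
by apply: hinj E2 E.
Qed.


Local Open Scope ring_scope.

Lemma structure n (hn : (2 <= n)%N) (a : pmapN n) (ha : INinf a) :
  exists tau : {perm 'I_n}, forall x z, a x = Some z -> uf tau z = x.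
Proof.
case: ha => hpm hinj hiso [[sd hsd] [sr hsr]].
have n0 : (0 < n)%N by apply: leq_trans hn.
pose M := (maxc sd).+1.
have dom_of : forall x, inN x -> forall j, (maxc sd < x j)%N -> in_dom a x.
  move=> x hin j hj; apply: NNPP => nd; have := maxc_ge j (hsd x hin nd) => h; by move: (leq_ltn_trans h hj); rewrite ltnn.
have ran_of : forall y, inN y -> forall j, (maxc sr < y j)%N -> in_ran a y.
  move=> y hin j hj; apply: NNPP => nd; have := maxc_ge j (hsr y hin nd) => h; by move: (leq_ltn_trans h hj); rewrite ltnn.
have bigdom : forall x : pt n, (forall j, M <= x j)%N -> in_dom a x.
  move=> x hx; apply: (dom_of x _ (Ordinal n0)); last exact: hx.
  by apply/forallP => j; apply: leq_trans (hx j).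
have get : forall x, in_dom a x -> a x = Some (odflt x (a x)) by move=> x [y ->].
pose p0 : pt n := [ffun=> M].
pose p i := shiftp p0 i.
pose q0 := odflt p0 (a p0); pose q i := odflt (p i) (a (p i)).
have Hq0 : a p0 = Some q0 by apply: get; apply: bigdom => j; rewrite ffunE.
have Hq i : a (p i) = Some (q i).
  by apply: get; apply: bigdom => j; rewrite !ffunE leq_addr.
pose v i j := zc (q i) j - zc q0 j.
have isoz : forall x y x' y', a x = Some x' -> a y = Some y' -> d2z x' y' = d2z x y.
  by move=> x y x' y' hx hy; rewrite -!d2E; congr Posz; exact: hiso hx hy.
have V1 : forall i, \sum_j v i j ^+ 2 = 1.
  move=> i; have := isoz _ _ _ _ (Hq i) Hq0.
  rewrite [d2z (p i) p0]d2zC d2z_shift d2zz subrr mulr0 addr0 add0r.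
  by [].
have V2 : forall i k, i != k -> \sum_j v i j * v k j = 0.
  move=> i k hik; have := isoz _ _ _ _ (Hq i) (Hq k).
  rewrite /p d2z_shift [d2z (shiftp p0 i) p0]d2zC d2z_shift d2zz.
  have -> : zc p0 k - zc (shiftp p0 i) k = 0.
    by rewrite /zc !ffunE eq_sym (negbTE hik) addn0 subrr.
  have -> : zc p0 i - zc p0 i = 0 by rewrite subrr.
  have -> : d2z (q i) (q k) = \sum_j (v i j - v k j) ^+ 2.
    by apply: eq_bigr => j _; rewrite /v; congr (_ ^+ 2); ring.
  rewrite sq_expand V1 V1.
  set S := \sum_(j < n) _. lia.
have V3 : forall x z, a x = Some z -> forall i,
    \sum_j (zc z j - zc q0 j) * v i j = zc x i - M%:Z.
  move=> x z E i; have h1 := isoz _ _ _ _ E (Hq i); have h0 := isoz _ _ _ _ E Hq0.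
  rewrite /p d2z_shift in h1.
  have e1 : d2z z (q i) = \sum_j ((zc z j - zc q0 j) - v i j) ^+ 2.
    by apply: eq_bigr => j _; rewrite /v; congr (_ ^+ 2); ring.
  rewrite e1 sq_expand V1 in h1.
  have e0 : zc p0 i = M%:Z by rewrite /zc ffunE.
  rewrite e0 in h1.
  have e2 : d2z z q0 = \sum_j (zc z j - zc q0 j) ^+ 2 by [].
  rewrite e2 in h0. rewrite h0 in h1.
  set S := \sum_(j < n) (_ * _) in h1 *.
  lia.
pose tf i := odflt i [pick k | v i k != 0].
have Htf : forall i, (v i (tf i) = 1 \/ v i (tf i) = -1) /\
                     forall j, j != tf i -> v i j = 0.
  move=> i; have [k [hk1 hk2]] := UV (V1 i).
  suff -> : tf i = k by [].
  rewrite /tf; case: pickP => [k' hk' | h0] /=.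
    by apply: contraTeq hk' => /hk2 ->; rewrite eqxx.
  by have := h0 k; case: hk1 => ->.
have tinj : injective tf.
  move=> i k e; apply/eqP; apply: contraT => hik.
  have := V2 _ _ hik.
  rewrite (@sum_single _ (v i) (v k) (tf k)); last exact: (Htf k).2.
  case: (Htf k).1 => ->; rewrite -e; case: (Htf i).1 => ->; lia.
pose tau := perm tinj.
have tauE : forall i, tau i = tf i by move=> i; rewrite permE.
have key1 : forall x z i, a x = Some z ->
    (zc z (tf i) - zc q0 (tf i)) * v i (tf i) = zc x i - M%:Z.
  move=> x z i E; rewrite -(V3 _ _ E i).
  by rewrite (@sum_single _ _ (v i) (tf i)) //; exact: (Htf i).2.
have eps : forall i, v i (tf i) = 1.
  move=> i; case: (Htf i).1 => // hm.
  pose x : pt n := [ffun j => if j == i then (M + q0 (tf i))%N else M].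
  have : in_dom a x.
    by apply: bigdom => j; rewrite ffunE; case: ifP => _ //; rewrite leq_addr.
  case=> z E; have := key1 _ _ i E; rewrite hm /zc ffunE eqxx.
  have := hpm _ _ E => -[_ /forallP /(_ (tf i))]; lia.
have key2 : forall x z i, a x = Some z ->
    zc z (tf i) - zc q0 (tf i) = zc x i - M%:Z.
  by move=> x z i E; rewrite -(key1 _ _ i E) eps mulr1.
have c0 : forall i, q0 (tf i) = M.
  move=> i; case: (ltngtP (q0 (tf i)) M) => // h.
  - pose x : pt n := [ffun j => if j == i then 1%N else M].
    have [j hj] := exists_other hn i.
    have : in_dom a x.
      apply: (dom_of x _ j); last by rewrite ffunE (negbTE hj).
      by apply/forallP => k; rewrite ffunE; case: ifP.
    case=> z E; have := key2 _ _ i E; rewrite /zc ffunE eqxx.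
    have := hpm _ _ E => -[_ /forallP /(_ (tf i))]; lia.
  - pose y : pt n := [ffun j => if j == tf i then 1%N else (maxc sr).+1].
    have [j hj] := exists_other hn (tf i).
    have : in_ran a y.
      apply: (ran_of y _ j); last by rewrite ffunE (negbTE hj).
      by apply/forallP => k; rewrite ffunE; case: ifP.
    case=> x E; have := key2 _ _ i E; rewrite /zc ffunE eqxx.
    have := hpm _ _ E => -[/forallP /(_ i) hx _]; lia.
exists tau => x z E; apply/ffunP => i; rewrite ffunE tauE.
by have := key2 _ _ i E; rewrite /zc c0 => /(congr1 (fun t => t + M%:Z)); rewrite !subrK => -[].
Qed.


Local Close Scope ring_scope.



Lemma unit_tot n (t : pmapN n) : unitH t -> forall y, inN y -> exists x, t y = Some x.
Proof.
move=> [_ [t' [_ [h _]]]] y hy; have := h y; rewrite /pcompN /pidN hy.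
by case: (t y) => [x|] // _; exists x.
Qed.

Lemma unit_sur n (t : pmapN n) : unitH t -> forall w, inN w -> exists y, t y = Some w.
Proof.
move=> [_ [t' [_ [_ h]]]] w hw; have := h w; rewrite /pcompN /pidN hw.
by case: (t' w) => [y|] // E; exists y.
Qed.

Lemma unit_none n (t : pmapN n) : unitH t -> forall y, ~~ inN y -> t y = None.
Proof.
move=> [[hpm _ _ _] _] y hy; case E: (t y) => [x|] //.
by have [h _] := hpm _ _ E; rewrite h in hy.
Qed.

Lemma big_notin n (hn : (0 < n)%N) (s : seq (pt n)) (w : pt n) :
  (forall j, (maxc s).+1 <= w j)%N -> inN w /\ w \notin s.
Proof.
move=> hw; split; first by apply/forallP => j; apply: leq_trans (hw j).
apply/negP => /(maxc_ge (Ordinal hn)) h.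
by have := leq_trans (hw (Ordinal hn)) h; rewrite ltnn.
Qed.

Lemma umE n (t : {perm 'I_n}) y : inN y -> um t y = Some (uf t y).
Proof. by rewrite /um => ->. Qed.

Lemma uf_inj n (t : {perm 'I_n}) : injective (uf t).
Proof. by move=> x y /(congr1 (uf (t^-1)%g)); rewrite !ufK. Qed.

Unset Implicit Arguments.
Theorem lemma3p4 (n : nat) (hn : 2 <= n) (a : pmapN n) (ha : INinf a) :
  (exists sl, unitH sl /\ idempotentI (pcompN sl a) /\
     forall t, unitH t -> idempotentI (pcompN t a) -> peq t sl) /\
  (exists sr, unitH sr /\ idempotentI (pcompN a sr) /\
     forall t, unitH t -> idempotentI (pcompN a t) -> peq t sr).
Proof.
have [tau htau] := structure hn ha.
have ha' := ha; case: ha' => hpm hinj hiso [[sd hsd] [sr hsr]].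
have n0 : (0 < n)%N by apply: leq_trans hn.
split; exists (um tau); split; try exact: unitH_um; split.
- apply: pid_idem.
    move=> y z; rewrite /pcompN /um; case: ifP => // hy E; split => //.
    by apply: (@uf_inj _ tau); rewrite (htau _ _ E).
  exists (map (uf (tau^-1)%g) sd) => y hy nd.
  rewrite -[y](ufK tau); apply: map_f; apply: hsd; first by rewrite inN_uf.
  by case=> w E; apply: nd; exists w; rewrite /pcompN umE.
- move=> t ut ie x; case: (boolP (inN x)) => hx; last first.
    by rewrite (unit_none ut hx) /um (negbTE hx).
  have G : forall y w, t y = Some w -> in_dom a w -> w = uf tau y.
    move=> y w E [z Ea].
    have E2 : pcompN t a y = Some z by rewrite /pcompN E.
    have := idem_pid ie E2 => zy; subst z.
    by rewrite (htau _ _ Ea).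
  have [w E] := unit_tot ut hx; rewrite umE // E; congr Some.
  case: (classic (in_dom a w)) => hd; first exact: G.
  apply: (@farpt _ _ _ (maxc sd).+1) => w' hw'.
  have [hw'N hw's] := big_notin n0 hw'.
  have hd' : in_dom a w' by apply: NNPP => nd; rewrite (hsd _ hw'N nd) in hw's.
  have [y' E'] := unit_sur ut hw'N.
  have := G _ _ E' hd' => ew; subst w'.
  have [_ _ hti _] := ut.1.
  by rewrite (hti _ _ _ _ E E') d2_uf.
- apply: pid_idem.
    move=> x z; rewrite /pcompN; case Ea: (a x) => [w|] //.
    have [hxN hwN] := hpm _ _ Ea.
    rewrite umE // => -[<-]; split => //; exact: htau.
  exists sd => x hx nd; apply: hsd => // -[w Ea]; apply: nd.
  have [_ hwN] := hpm _ _ Ea.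
  by exists (uf tau w); rewrite /pcompN Ea umE.
- move=> t ut ie y; case: (boolP (inN y)) => hy; last first.
    by rewrite (unit_none ut hy) /um (negbTE hy).
  have G : forall y x, t y = Some x -> in_ran a y -> x = uf tau y.
    move=> y0 x E [x0 Ea].
    have E2 : pcompN a t x0 = Some x by rewrite /pcompN Ea.
    have := idem_pid ie E2 => xx; subst x.
    by rewrite (htau _ _ Ea).
  have [x E] := unit_tot ut hy; rewrite umE // E; congr Some.
  case: (classic (in_ran a y)) => hr; first exact: G.
  apply: (@farpt _ _ _ (maxc sr).+1) => w' hw'.
  pose w := uf (tau^-1)%g w'.
  have hw : forall j, ((maxc sr).+1 <= w j)%N by move=> j; rewrite ffunE.
  have [hwN hws] := big_notin n0 hw.
  have hr' : in_ran a w by apply: NNPP => nd; rewrite (hsr _ hwN nd) in hws.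
  have [x' E'] := unit_tot ut hwN.
  have := G _ _ E' hr'; rewrite /w ufKV => ex; subst x'.
  have [_ _ hti _] := ut.1.
  by rewrite (hti _ _ _ _ E E') -(d2_uf tau) ufKV.
Qed.
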